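(* Let $n$ be a natural number with prime factorisation $n=p_1^{\alpha_1}\cdots p_t^{\alpha_t}$. Then every skew brace of order $n$ is left-nilpotent if and only if $p_i$ does not divide $p_j^k-1$ for all $i\neq j$ and all $1\le k\le\alpha_j$.
   Context: A skew brace is a set $A$ with two group structures $(A,+)$ and $(A,\circ)$ such that $a\circ(b+c)=a\circ b-a+a\circ c$ for all $a,b,c\in A$; its order is $|A|$. Put $a*b=-a+a\circ b-b$ and for subsets $X,Y$ let $X*Y$ be the subgroup of $(A,+)$ generated by all $x*y$ with $x\in X,y\in Y$. Define $A^1=A$ and $A^{m+1}=A*A^m$; $A$ is left-nilpotent if $A^m=\{0\}$ for some $m$. *)

(* Defs.v *)
From mathcomp Require Import all_boot.
Set Implicit Arguments. Unset Strict Implicit. Unset Printing Implicit Defensive.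

Record skew_brace (A : finType) := SkewBrace {
  sb_add : A -> A -> A;
  sb_zero : A;
  sb_opp : A -> A;
  sb_circ : A -> A -> A;
  sb_one : A;
  sb_inv : A -> A;
  sb_addA : forall a b c, sb_add a (sb_add b c) = sb_add (sb_add a b) c;
  sb_add0l : forall a, sb_add sb_zero a = a;
  sb_add0r : forall a, sb_add a sb_zero = a;
  sb_addNl : forall a, sb_add (sb_opp a) a = sb_zero;
  sb_addNr : forall a, sb_add a (sb_opp a) = sb_zero;
  sb_circA : forall a b c, sb_circ a (sb_circ b c) = sb_circ (sb_circ a b) c;
  sb_circ1l : forall a, sb_circ sb_one a = a;
  sb_circ1r : forall a, sb_circ a sb_one = a;
  sb_circVl : forall a, sb_circ (sb_inv a) a = sb_one;
  sb_circVr : forall a, sb_circ a (sb_inv a) = sb_one;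
  sb_brace : forall a b c,
    sb_circ a (sb_add b c) = sb_add (sb_add (sb_circ a b) (sb_opp a)) (sb_circ a c)
}.

Section SkewBraceDefs.
Variables (A : finType) (B : skew_brace A).

Definition sb_star (a b : A) : A :=
  sb_add B (sb_add B (sb_opp B a) (sb_circ B a b)) (sb_opp B b).

Definition is_add_subgroup (S : {set A}) : bool :=
  [&& sb_zero B \in S,
      [forall x in S, forall y in S, sb_add B x y \in S] &
      [forall x in S, sb_opp B x \in S]].

Definition add_gen (X : {set A}) : {set A} :=
  [set x | [forall S : {set A}, ((X \subset S) && is_add_subgroup S) ==> (x \in S)]].

Definition sb_star_set (X Y : {set A}) : {set A} :=
  add_gen [set sb_star x y | x in X, y in Y].

(* left_series k = A^(k+1):  A^1 = A, A^(m+1) = A * A^m *)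
Fixpoint left_series (k : nat) : {set A} :=
  match k with
  | 0 => [set: A]
  | k'.+1 => sb_star_set [set: A] (left_series k')
  end.

Definition left_nilpotent : Prop :=
  exists k : nat, left_series k = [set sb_zero B].

End SkewBraceDefs.

(* Main.v *)
Require Import Defs.
From mathcomp Require Import all_boot all_algebra all_fingroup all_solvable all_field zify ring.
Set Implicit Arguments. Unset Strict Implicit. Unset Printing Implicit Defensive.

Section Pz.
Local Open Scope group_scope.
Definition condC (n : nat) := forall p q : nat, p \in primes n -> q \in primes n -> p != q ->
     forall k : nat, 1 <= k <= logn q n -> ~~ (p %| q ^ k - 1).

Lemma FPL (gT : finGroupType) (n : nat) (R Q : {group gT}) (p q : nat) :
  0 < n -> condC n -> p != q -> p.-group R -> q.-group Q ->
  R \subset 'N(Q) -> (#|R| %| n)%N -> (#|Q| %| n)%N -> R \subset 'C(Q).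
Proof.
move=> n0 Cn pq pR qQ nQR dRn dQn.
have [->|ntR] := eqVneq R 1%G; first exact: sub1G.
have [Q1|ntQ] := eqVneq Q 1%G; first by rewrite Q1 cents1.
have [pr_p p_R _] := pgroup_pdiv pR ntR.
have [pr_q q_Q _] := pgroup_pdiv qQ ntQ.
have pn : p \in primes n by rewrite mem_primes pr_p n0 (dvdn_trans p_R dRn).
have qn : q \in primes n by rewrite mem_primes pr_q n0 (dvdn_trans q_Q dQn).
have actsRQ : [acts R, on Q | 'J] by rewrite astabsJ.
have := pgroup_fix_mod pR actsRQ.
rewrite afixJ => Hmod.
have sF : Q :&: 'C(R) \subset Q := subsetIl _ _.
have qF : q.-group (Q :&: 'C(R)) := pgroupS sF qQ.
rewrite centsC.
set a := logn q #|Q|.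
set e := logn q #|Q :&: 'C(R)|.
have cQ : #|Q| = (q ^ a)%N := card_pgroup qQ.
have cF : #|Q :&: 'C(R)| = (q ^ e)%N := card_pgroup qF.
have [leae|ltea] := leqP a e.
  have : Q :&: 'C(R) == Q :> {set gT}.
    by rewrite eqEcard sF cQ cF leq_exp2l ?prime_gt1.
  by move/eqP => <-; rewrite subsetIr.
have aln : (a <= logn q n)%N.
  rewrite -(pfactor_dvdn a pr_q n0); by rewrite -cQ.
have Hd : (p %| q ^ a - q ^ e)%N.
  have le1 : (q ^ e <= q ^ a)%N by rewrite leq_exp2l ?prime_gt1 // ltnW.
  rewrite -(eqn_mod_dvd p le1) -cQ -cF; apply/eqP; exact: Hmod.
have : (p %| q ^ (a - e) - 1)%N.
  have E : (q ^ a - q ^ e = q ^ e * (q ^ (a - e) - 1))%N.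
    by rewrite mulnBr muln1 -expnD subnKC // ltnW.
  have cop : coprime p (q ^ e) by rewrite coprimeXr // prime_coprime // dvdn_prime2 // eq_sym.
  by rewrite E Gauss_dvdr in Hd.
move=> H; exfalso; move: H; apply/negP; apply: (Cn p q pn qn pq); rewrite subn_gt0 ltea /=.
exact: leq_trans (leq_subr _ _) aln.
Qed.
Section CaseB.
Variables (gT : finGroupType) (G : {group gT}).
Hypothesis nilP : forall H : {group gT}, H \proper G -> nilpotent H.
Hypothesis simG : forall N : {group gT}, N <| G -> N :=: 1 \/ N :=: G.

Lemma maxTI_aux k (M1 M2 : {group gT}) :
  maximal M1 G -> maximal M2 G -> M1 != M2 ->
  (#|G| - #|M1 :&: M2| < k)%N -> M1 :&: M2 = 1.
Proof.
elim: k M1 M2 => // k IH M1 M2 mM1 mM2 neM lt_k.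
apply/eqP/contraT => ntI.
have pM1 : M1 \proper G := maxgroupp mM1.
have pM2 : M2 \proper G := maxgroupp mM2.
have sM1 := proper_sub pM1; have sM2 := proper_sub pM2.
set I := M1 :&: M2.
have IM : forall (Ma Mb : {group gT}), maximal Ma G -> maximal Mb G -> Ma != Mb ->
   Ma :&: Mb \proper Ma.
  move=> Ma Mb mMa mMb neab; rewrite properEneq subsetIl andbT.
  apply/eqP => E; have sab : Ma \subset Mb by rewrite -E subsetIr.
  have := maxgroupP mMa => -[_ /(_ Mb (maxgroupp mMb) sab) Eab].
  have eab : Ma = Mb by apply: val_inj; rewrite /= Eab.
  by move: neab; rewrite eab eqxx.
have pI1 : I \proper M1 := IM _ _ mM1 mM2 neM.
have pI2 : I \proper M2 by rewrite /I setIC; apply: IM; rewrite // eq_sym.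
have nI1 := nilpotent_proper_norm (nilP pM1) pI1.
have nI2 := nilpotent_proper_norm (nilP pM2) pI2.
have sIG : I \subset G := subset_trans (subsetIl _ _) sM1.
have [NG|[M mM sNM]] := maximal_exists (subsetIl G 'N(I)).
  have : (I :&: G)%G <| G.
    rewrite /normal subsetIr /=; apply/subsetP => x Gx.
    have : x \in 'N_G(I) by rewrite NG.
    by rewrite (setIidPl sIG) => /setIP[].
  rewrite /= (setIidPl sIG) => /simG [I1|IG].
    by move: I1 ntI => /= ->; rewrite eqxx.
  by move: IG pI1; rewrite /I /= => -> => /proper_sub; rewrite (negbTE (proper_subn pM1)).
have key : forall (Ma : {group gT}), maximal Ma G -> I \proper 'N_Ma(I) -> M :=: Ma.
  move=> Ma mMa pN; apply/eqP/contraT => neMa.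
  have neMa' : M != Ma.
    apply: contra neMa => /eqP ->; exact: eqxx.
  have sub : 'N_Ma(I) \subset M :&: Ma.
    rewrite subsetI subsetIl andbT; apply: subset_trans sNM.
    by rewrite setSI // proper_sub // (maxgroupp mMa).
  have c1 := proper_card (proper_sub_trans pN sub).
  have c2 : (#|M :&: Ma| <= #|G|)%N.
    by apply: subset_leq_card; rewrite subIset // proper_sub // (maxgroupp mM).
  have c3 : (#|G| - #|M :&: Ma| < k)%N.
    move: lt_k c1 c2; rewrite -/I; set x := #|I|; set y := #|M :&: Ma|; set z := #|G|.
    move=> h1 h2 h3; clear -h1 h2 h3; lia.
  have E := IH M Ma mM mMa neMa' c3.
  case/negP: ntI; rewrite -subG1 -E.
  exact: subset_trans (proper_sub pN) _ .
have E1 := key M1 mM1 nI1.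
have E2 := key M2 mM2 nI2.
have e12 : M1 = M2 by apply: val_inj; rewrite /= -E1 -E2.
by move: neM; rewrite e12 eqxx.
Qed.

Lemma maxTI (M1 M2 : {group gT}) :
  maximal M1 G -> maximal M2 G -> M1 != M2 -> M1 :&: M2 = 1.
Proof. by move=> *; apply: (@maxTI_aux (#|G|.+1)) => //; rewrite ltnS leq_subr. Qed.

Hypothesis ncG : ~~ cyclic G.

Lemma G_nt : G :!=: 1.
Proof. by apply: contra ncG => /eqP ->; exact: cyclic1. Qed.

Lemma max_nt (M : {group gT}) : maximal M G -> M :!=: 1.
Proof.
move=> mM; apply/eqP => M1.
have [x Gx ntx] := trivgPn _ G_nt.
have pX : <[x]> \proper G.
  rewrite properEneq cycle_subG Gx andbT; apply: contra ncG => /eqP <-.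
  exact: cycle_cyclic.
have [_ /(_ <[x]>%G pX)] := maxgroupP mM.
rewrite M1 sub1G => /(_ isT) /eqP.
by rewrite cycle_eq1 (negbTE ntx).
Qed.

Lemma max_selfnorm (M : {group gT}) : maximal M G -> 'N_G(M) = M.
Proof.
move=> mM; have pM : M \proper G := maxgroupp mM.
have sMN : M \subset 'N_G(M) by rewrite subsetI proper_sub // normG.
have [NG|neNG] := eqVneq ('N_G(M)) G.
  have nMG : M <| G by rewrite /normal proper_sub // -NG subsetIr.
  case: (simG nMG) => [M1|MG].
    by move: (max_nt mM); rewrite M1 eqxx.
  by move: pM; rewrite MG properE subxx.
have pN : 'N_G(M) \proper G by rewrite properEneq neNG subsetIl.
have [_ /(_ ('N_G(M))%G pN sMN)] := maxgroupP mM.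
by [].
Qed.

Lemma max_normedTI (M : {group gT}) : maximal M G -> normedTI M^# G M.
Proof.
move=> mM; have pM : M \proper G := maxgroupp mM.
apply/normedTI_P; split.
- by rewrite setD_eq0 subG1 (max_nt mM).
- by rewrite subsetI proper_sub // normD1 normG.
move=> g Gg /pred0Pn[y /andP[/= My Mgy]].
rewrite conjD1g in Mgy.
move: My Mgy; rewrite !inE => /andP[nty My] /andP[_ Mgy].
have mMg : maximal (M :^ g)%G G by rewrite /= -(conjGid Gg) maximalJ.
have [eM|neM] := eqVneq M (M :^ g)%G.
  rewrite -(max_selfnorm mM) inE Gg /=; apply/normP.
  by move: eM => /(congr1 val) /= <-.
have := maxTI mM mMg neM => /setP/(_ y).
by rewrite !inE My Mgy (negbTE nty).
Qed.

Lemma card_cs (M : {group gT}) : maximal M G ->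
  #|class_support M^# G| = ((#|M| - 1) * #|G : M|)%N.
Proof.
move=> mM; rewrite (card_support_normedTI (max_normedTI mM)).
by rewrite [#|M|](cardsD1 1) group1 /= add1n subn1.
Qed.

Lemma cs_sub (M : {group gT}) : M \subset G -> class_support M^# G \subset G^#.
Proof.
move=> sMG; apply/subsetP => _ /imset2P[a g /setD1P[nta Ma] Gg ->].
rewrite !inE conjg_eq1 nta /= groupJ //; exact: (subsetP sMG).
Qed.

Lemma caseB_false : False.
Proof.
have [G1|[M mM _]] := maximal_exists (sub1G G).
  by move: G_nt; rewrite -G1 eqxx.
have pM : M \proper G := maxgroupp mM.
set cs := class_support M^# G.
have cG : #|G^#| = (#|G| - 1)%N by rewrite [#|G|](cardsD1 1) group1 add1n subn1.
have ntM := max_nt mM.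
have LM := Lagrange (proper_sub pM).
have iM : (1 < #|G : M|)%N by rewrite indexg_gt1 proper_subn.
have aM : (1 < #|M|)%N by rewrite cardG_gt1.
have ccs := card_cs mM.
have [x /andP[Gx ncx]] : exists x, (x \in G^#) && (x \notin cs).
  apply/existsP/contraT; rewrite negb_exists => /forallP H.
  have : G^# \subset cs by apply/subsetP => x Gx; move: (H x); rewrite Gx /= negbK.
  move/subset_leq_card; rewrite cG -/cs ccs.
  move: LM iM aM; set a := #|M|; set i := #|G : M|; set N := #|G|.
  move=> h1 h2 h3; clear -h1 h2 h3; nia.
move: Gx; rewrite inE => /andP[ntx Gx].
have pX : <[x]> \proper G.
  rewrite properEneq cycle_subG Gx andbT; apply: contra ncG => /eqP <-.
  exact: cycle_cyclic.
have [XG|[M' mM' sXM']] := maximal_exists (proper_sub pX).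
  by move: pX; rewrite XG properE subxx.
have pM' : M' \proper G := maxgroupp mM'.
set cs' := class_support M'^# G.
have dis : [disjoint cs & cs'].
  apply/pred0P => y /=; apply/negP => /andP[].
  move=> /imset2P[u g /setD1P[ntu Mu] Gg ->] /imset2P[v h /setD1P[ntv M'v] Gh E].
  have mMg : maximal (M :^ g)%G G by rewrite /= -(conjGid Gg) maximalJ.
  have mM'h : maximal (M' :^ h)%G G by rewrite /= -(conjGid Gh) maximalJ.
  have [eM|neM] := eqVneq (M :^ g)%G (M' :^ h)%G; last first.
    have := maxTI mMg mM'h neM => /setP/(_ (u ^ g)).
    rewrite !inE memJ_conjg Mu E memJ_conjg M'v /= => /eqP.
    by rewrite -E conjg_eq1 (negbTE ntu).
  have eMs : M :^ g = M' :^ h := congr1 val eM.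
  have xM' : x \in M' by rewrite -cycle_subG.
  have : x ^ h \in M :^ g by rewrite eMs memJ_conjg.
  have E2 : x ^ h = ((x ^ h) ^ g^-1) ^ g by rewrite conjgKV.
  rewrite E2 memJ_conjg => Mz.
  move: ncx; apply/negP; rewrite negbK.
  have -> : x = ((x ^ h) ^ g^-1) ^ (g * h^-1) by rewrite conjgM conjgKV conjgK.
  rewrite /cs /class_support; apply: imset2_f; last by rewrite groupM ?groupV.
  by rewrite !inE conjg_eq1 Mz andbT; move: ntx; rewrite !inE conjg_eq1.
have cs'c := card_cs mM'.
have LM' := Lagrange (proper_sub pM').
have iM' : (1 < #|G : M'|)%N by rewrite indexg_gt1 proper_subn.
have aM' : (1 < #|M'|)%N by rewrite cardG_gt1 (max_nt mM').
have : (#|cs :|: cs'| <= #|G^#|)%N.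
  by apply: subset_leq_card; rewrite subUset !cs_sub ?proper_sub.
rewrite cardsU (disjoint_setI0 dis) cards0 subn0 cG ccs cs'c.
move: LM iM aM LM' iM' aM'; set a := #|M|; set i := #|G : M|; set N := #|G|.
set b := #|M'|; set j := #|G : M'|.
move=> h1 h2 h3 h4 h5 h6; clear -h1 h2 h3 h4 h5 h6; nia.
Qed.
End CaseB.

Lemma sylow_gen (gT : finGroupType) (G H : {group gT}) : H \subset G ->
  (forall p, prime p -> exists2 P : {group gT}, p.-Sylow(G) P & P \subset H) ->
  H :=: G.
Proof.
move=> sHG hS; apply: index1g => //; apply/eqP/contraT => ne1.
have gt1 : (1 < #|G : H|)%N by rewrite ltn_neqAle eq_sym ne1 indexg_gt0.
set p := pdiv #|G : H|.
have pr_p : prime p := pdiv_prime gt1.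
have [P sylP sPH] := hS p pr_p.
have /and3P[sPG _ p'P] := sylP.
have := Lagrange_index sHG sPH => E.
have : p \in \pi(#|G : P|).
  rewrite mem_primes pr_p indexg_gt0 /= -E.
  exact: dvdn_mulr (pdiv_dvd _).
by move/(pnatPpi p'P); rewrite !inE /= eqxx.
Qed.


Lemma pazd_aux n : 0 < n -> condC n -> forall m (gT : finGroupType) (G : {group gT}),
  (#|G| <= m)%N -> (#|G| %| n)%N -> nilpotent G.
Proof.
move=> n0 Cn; elim=> [|m IH] gT G leG dGn.
  by move: leG; rewrite leqn0 (cardD1 1) group1.
have IHs : forall (hT : finGroupType) (H : {group hT}), (#|H| < #|G|)%N ->
    (#|H| %| n)%N -> nilpotent H.
  move=> hT H ltH dH; apply: IH dH; rewrite -ltnS; exact: leq_trans ltH leG.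
have nilP : forall H : {group gT}, H \proper G -> nilpotent H.
  move=> H pH; apply: IHs; first exact: proper_card.
  exact: dvdn_trans (cardSg (proper_sub pH)) dGn.
have [cG|ncG] := boolP (cyclic G); first exact/abelian_nil/cyclic_abelian.
have [/existsP[N /and3P[nNG ntN neNG]]|noN] :=
  boolP [exists N : {group gT}, [&& N <| G, N != 1%G & N != G]]; last first.
  exfalso; apply: (caseB_false nilP _ ncG) => N nNG.
  move: noN; rewrite negb_exists => /forallP/(_ N); rewrite nNG /=.
  case: (eqVneq N 1%G) => [-> _|ntN]; first by left.
  case: (eqVneq N G) => [-> _|neNG]; first by right.
  by [].
have sNG : N \subset G := normal_sub nNG.
have pNG : N \proper G.
  rewrite properEneq sNG andbT; apply: contra neNG => /eqP E.
  by apply/eqP/val_inj.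
have nilN := nilP _ pNG.
have gt1N : (1 < #|N|)%N by rewrite cardG_gt1.
set q := pdiv #|N|.
have pr_q : prime q := pdiv_prime gt1N.
set Nq := 'O_q(N).
have hallNq : q.-Hall(N) Nq := nilpotent_pcore_Hall q nilN.
have qNq : q.-group Nq := pHall_pgroup hallNq.
have ntNq : Nq != 1%G.
  rewrite -cardG_gt1 (card_Hall hallNq) p_part_gt1 mem_primes pr_q cardG_gt0.
  exact: pdiv_dvd.
have [_ q_Nq _] := pgroup_pdiv qNq ntNq.
have nNqG : Nq <| G := char_normal_trans (pcore_char q N) nNG.
have [Q sylQ] := Sylow_exists q G.
have qQ : q.-group Q := pHall_pgroup sylQ.
have sQG : Q \subset G := pHall_sub sylQ.
have actQ : [acts Q, on Nq | 'J].
  by rewrite astabsJ; exact: subset_trans sQG (normal_norm nNqG).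
have Hmod := pgroup_fix_mod qQ actQ.
rewrite afixJ in Hmod.
set Zc := Nq :&: 'C(Q) in Hmod.
have ntZc : (Nq :&: 'C(Q))%G != 1%G.
  rewrite -cardG_gt1 /=; apply: leq_trans (prime_gt1 pr_q) _.
  apply: dvdn_leq; first exact: cardG_gt0.
  by rewrite /dvdn -/Zc -Hmod; move: q_Nq; rewrite /dvdn.
have dNq : (#|Nq| %| n)%N.
  exact: dvdn_trans (cardSg (subset_trans (pcore_sub _ _) sNG)) dGn.
have CG : 'C_G(Zc) :=: G.
  apply: sylow_gen; first exact: subsetIl.
  move=> p pr_p; have [P sylP] := Sylow_exists p G.
  have [->|npq] := eqVneq p q.
    exists Q => //; rewrite subsetI sQG centsC; exact: subsetIr.
  exists P => //; rewrite subsetI (pHall_sub sylP) /=.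
  apply: subset_trans (centS (subsetIl _ _)).
  apply: (FPL n0 Cn npq (pHall_pgroup sylP) qNq).
  - exact: subset_trans (pHall_sub sylP) (normal_norm nNqG).
  - exact: dvdn_trans (cardSg (pHall_sub sylP)) dGn.
  - exact: dNq.
have sZc : Zc \subset 'Z(G).
  rewrite subsetI; apply/andP; split.
    exact: subset_trans (subsetIl _ _) (subset_trans (pcore_sub _ _) sNG).
  rewrite centsC -{1}CG; exact: subsetIr.
have ntZ : 'Z(G) != 1%G.
  apply: contra ntZc => /eqP Z1; apply/eqP/val_inj => /=.
  by apply/eqP; rewrite -subG1 -/Zc; move: sZc; rewrite /= Z1.
have nZG := normal_norm (center_normal G).
rewrite -quotient_center_nil; apply: IHs.
  rewrite (card_quotient nZG).
  have := Lagrange (center_sub G); rewrite -cardG_gt1 in ntZ.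
  have := indexg_gt0 G 'Z(G).
  move: ntZ; set z := #|'Z(G)|; set i := #|G : 'Z(G)|; set N0 := #|G|.
  move=> h1 h3 h2; clear -h1 h2 h3; nia.
by rewrite (card_quotient nZG); exact: dvdn_trans (dvdn_indexg _ _) dGn.
Qed.

Lemma pazd n (gT : finGroupType) (G : {group gT}) :
  0 < n -> condC n -> (#|G| %| n)%N -> nilpotent G.
Proof. by move=> n0 Cn; apply: (pazd_aux n0 Cn (leqnn _)). Qed.

Lemma pcore_comm (gT : finGroupType) (X : {group gT}) (p r : nat) :
  p != r -> 'O_p(X) \subset 'C('O_r(X)).
Proof.
move=> npr; apply/commG1P; apply/trivgP.
have nOp := normal_norm (pcore_normal p X).
have nOr := normal_norm (pcore_normal r X).
have -> : 1 = 'O_p(X) :&: 'O_r(X).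
  apply/esym/coprime_TIg; apply: (sub_pnat_coprime _ (pcore_pgroup p X) (pcore_pgroup r X)).
  by move=> x; rewrite !inE => /eqP ->; rewrite eq_sym.
apply: commg_subI; rewrite subsetI subxx /=.
  exact: subset_trans (pcore_sub _ _) nOr.
exact: subset_trans (pcore_sub _ _) nOp.
Qed.

Lemma nil_gen (gT : finGroupType) (T K : {group gT}) : nilpotent T ->
  (forall r : nat, 'O_r(T) \subset K) -> T \subset K.
Proof.
move=> nT H; rewrite -(nilpotent_Fitting nT) FittingEgen gen_subG.
by apply/bigcupsP => r _; exact: H.
Qed.

Lemma gam (gT : finGroupType) (T L : {group gT}) :
  L \subset 'N(T) -> nilpotent T -> nilpotent L ->
  (forall p q : nat, p != q -> 'O_p(L) \subset 'C('O_q(T))) -> nilpotent (T <*> L).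
Proof.
move=> nTL nilT nilL hC.
set Ga := (T <*> L)%G.
have nTG : T <| Ga by rewrite /normal joing_subl /= join_subG normG nTL.
have Sp_sub : forall p : nat, 'O_p(T) <*> 'O_p(L) \subset 'F(Ga).
  move=> p; apply: Fitting_max.
    rewrite /normal join_subG !(subset_trans (pcore_sub _ _)) ?joing_subl ?joing_subr //=.
    rewrite join_subG; apply/andP; split.
      apply: nil_gen => // r; have [->|npr] := eqVneq r p.
        exact: subset_trans (joing_subl _ _) (normG _).
      apply: subset_trans (cent_sub _); rewrite centY subsetI pcore_comm //=.
      by rewrite centsC hC // eq_sym.
    apply: nil_gen => // r; have [->|npr] := eqVneq r p.
      exact: subset_trans (joing_subr _ _) (normG _).
    apply: subset_trans (cent_sub _); rewrite centY subsetI /= hC //=.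
    by rewrite centsC pcore_comm // eq_sym.
  apply: (@pgroup_nil _ p).
  have nTpL : 'O_p(L) \subset 'N('O_p(T)).
    apply: subset_trans (pcore_sub _ _) _.
    exact: char_norm_trans (pcore_char _ _) nTL.
  by rewrite /= norm_joinEr // pgroupM !pcore_pgroup.
apply: nilpotentS (Fitting_nil Ga).
rewrite join_subG; apply/andP; split; apply: nil_gen => // r.
  exact: subset_trans (joing_subl _ _) (Sp_sub r).
exact: subset_trans (joing_subr _ _) (Sp_sub r).
Qed.

End Pz.

Import GRing.Theory.
Section Constr.
Variables (F : finFieldType) (N : nat) (u : {unit F}).
Hypothesis ordu : (#[u]%g %| (Zp_trunc N).+2)%N.
Hypothesis ntu : u != 1%g.
Local Open Scope ring_scope.

Definition CT := (F * 'Z_N)%type.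
Definition w (i : 'Z_N) : F := val (u ^+ (i : nat))%g.

Lemma wD i j : w (i + j) = w i * w j.
Proof.
rewrite /w -FinRing.val_unitM -expgD; congr val.
rewrite -(expg_mod_order u ((i + j)%R : nat)) -[in RHS](expg_mod_order u).
congr (u ^+ _)%g; exact: (modn_dvdm _ ordu).
Qed.

Lemma w0 : w 0 = 1.
Proof. by rewrite /w expg0 FinRing.val_unit1. Qed.

Definition cadd (a b : CT) : CT := (a.1 + b.1, a.2 + b.2).
Definition czero : CT := (0, 0).
Definition copp (a : CT) : CT := (- a.1, - a.2).
Definition ccirc (a b : CT) : CT := (a.1 + w a.2 * b.1, a.2 + b.2).
Definition cinv (a : CT) : CT := (- (w (- a.2) * a.1), - a.2).

Lemma pairE (a b : CT) : a.1 = b.1 -> a.2 = b.2 -> a = b.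
Proof. by case: a b => ? ? [? ?] /= -> ->. Qed.

Lemma wN i : w i * w (- i) = 1.
Proof. by rewrite -wD addrN w0. Qed.
Lemma wN' i : w (- i) * w i = 1.
Proof. by rewrite -wD addNr w0. Qed.

Definition cbrace : skew_brace CT.
Proof.
refine (@SkewBrace CT cadd czero copp ccirc czero cinv _ _ _ _ _ _ _ _ _ _ _).
- by move=> [a1 a2] [b1 b2] [c1 c2]; apply: pairE => /=; ring.
- by move=> [a1 a2]; apply: pairE => /=; ring.
- by move=> [a1 a2]; apply: pairE => /=; ring.
- by move=> [a1 a2]; apply: pairE => /=; ring.
- by move=> [a1 a2]; apply: pairE => /=; ring.
- move=> [a1 a2] [b1 b2] [c1 c2]; apply: pairE => /=; last by ring.
  by rewrite wD; ring.
- by move=> [a1 a2]; apply: pairE => /=; rewrite ?w0; ring.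
- by move=> [a1 a2]; apply: pairE => /=; ring.
- by move=> [a1 a2]; apply: pairE => /=; ring.
- move=> [a1 a2]; apply: pairE => /=; last by ring.
  by rewrite mulrN mulrA wN; ring.
- by move=> [a1 a2] [b1 b2] [c1 c2]; apply: pairE => /=; ring.
Defined.

Hypothesis N2 : (1 < N)%N.

Lemma w1 : w 1 = val u.
Proof.
rewrite /w; have -> : nat_of_ord (1 : 'Z_N) = 1%N by rewrite /= Zp_cast // modn_small.
by rewrite expg1.
Qed.

Lemma ls_big k (y : F) : (y, 0) \in left_series cbrace k.
Proof.
elim: k y => [|k IH] y; first by rewrite inE.
rewrite /= /sb_star_set /add_gen inE; apply/forallP => S; apply/implyP => /andP[sXS _].
apply: (subsetP sXS); apply/imset2P.
have nz : val u - 1 != 0.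
  rewrite subr_eq0; apply: contra ntu => /eqP e.
  by apply/eqP/val_inj; rewrite e FinRing.val_unit1.
exists ((0, 1) : CT) ((val u - 1)^-1 * y, 0); first by rewrite inE.
  exact: IH.
rewrite /sb_star /=; apply: pairE => /=; last by ring.
rewrite w1; have e : FinRing.uval u = val u by [].
rewrite e; field; exact: nz.
Qed.

Lemma cbrace_not_ln : ~ left_nilpotent cbrace.
Proof.
move=> [k E]; have := ls_big k 1; rewrite E inE => /eqP [] /eqP.
by rewrite oner_eq0.
Qed.
End Constr.


Section BP.
Local Open Scope group_scope.
Section BracePerm.
Variables (A : finType) (B : skew_brace A).
Local Notation "a ⊕ b" := (sb_add B a b) (at level 50, left associativity).
Local Notation "⊖ a" := (sb_opp B a) (at level 35).
Local Notation "a ⊙ b" := (sb_circ B a b) (at level 40, left associativity).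
Local Notation z0 := (sb_zero B).

Lemma addKl a b : ⊖ a ⊕ (a ⊕ b) = b.
Proof. by rewrite sb_addA sb_addNl sb_add0l. Qed.
Lemma addI a : injective (sb_add B a).
Proof. by move=> x y e; rewrite -(addKl a x) e addKl. Qed.
Lemma circKl a b : sb_inv B a ⊙ (a ⊙ b) = b.
Proof. by rewrite sb_circA sb_circVl sb_circ1l. Qed.
Lemma circI a : injective (sb_circ B a).
Proof. by move=> x y e; rewrite -(circKl a x) e circKl. Qed.
Lemma addIr a : injective (sb_add B ^~ a).
Proof.
move=> x y /= e; rewrite -(sb_add0r B x) -(sb_add0r B y) -(sb_addNr B a).
by rewrite !sb_addA e.
Qed.

Lemma oppK x : ⊖ (⊖ x) = x.
Proof. apply: (@addI (⊖ x)); by rewrite sb_addNl sb_addNr. Qed.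
Lemma opp0 : ⊖ z0 = z0.
Proof. by rewrite -{2}(sb_addNr B z0) sb_add0l. Qed.

Lemma one_zero : sb_one B = z0.
Proof.
have := sb_brace B (sb_one B) z0 z0.
rewrite !sb_circ1l ?sb_add0l ?sb_add0r => e.
by rewrite -(oppK (sb_one B)) -e opp0.
Qed.

Definition tau a : {perm A} := perm (@addI a).
Definition Lm a : {perm A} := perm (@circI a).

Lemma tauE a x : tau a x = a ⊕ x. Proof. by rewrite permE. Qed.
Lemma LmE a x : Lm a x = a ⊙ x. Proof. by rewrite permE. Qed.

Lemma tauM a b : tau a * tau b = tau (b ⊕ a).
Proof. by apply/permP => x; rewrite permM !tauE sb_addA. Qed.
Lemma tau0 : tau z0 = 1.
Proof. by apply/permP => x; rewrite perm1 tauE sb_add0l. Qed.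
Lemma tau_inj : injective tau.
Proof.
move=> a b e; have := congr1 (fun s : {perm A} => s z0) e.
by rewrite /= !tauE !sb_add0r.
Qed.
Lemma tauV a : (tau a)^-1 = tau (⊖ a).
Proof. by apply/esym; apply: (mulgI (tau a)); rewrite mulgV tauM sb_addNl tau0. Qed.

Lemma LmM a b : Lm a * Lm b = Lm (b ⊙ a).
Proof. by apply/permP => x; rewrite permM !LmE sb_circA. Qed.
Lemma Lm1 : Lm (sb_one B) = 1.
Proof. by apply/permP => x; rewrite perm1 LmE sb_circ1l. Qed.
Lemma Lm_inj : injective Lm.
Proof.
move=> a b e; have := congr1 (fun s : {perm A} => s (sb_one B)) e.
by rewrite /= !LmE !sb_circ1r.
Qed.

Lemma tauJ a b : tau b ^ Lm a = tau (a ⊙ b ⊕ ⊖ a).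
Proof.
have e : tau b * Lm a = Lm a * tau (a ⊙ b ⊕ ⊖ a).
  by apply/permP => x; rewrite !permM !tauE !LmE sb_brace.
by rewrite conjgE e mulgA mulVg mul1g.
Qed.

Definition lam a : {perm A} := Lm a * tau (⊖ a).

Lemma tau_star a b : tau (sb_star B a b) = [~ tau b, lam a].
Proof.
have e : tau b * lam a = lam a * tau b * tau (sb_star B a b).
  apply/permP => x; rewrite !permM !tauE !LmE /sb_star sb_brace.
  by rewrite !sb_addA -[_ ⊕ ⊖ b ⊕ b]sb_addA sb_addNl sb_add0r.
by rewrite commgEl conjgE e -(mulgA (lam a)) !mulKg.
Qed.


Definition Tset := [set tau a | a : A].
Definition Lset := [set Lm a | a : A].

Lemma Tgroup : group_set Tset.
Proof.
apply/group_setP; split; first by rewrite -tau0 imset_f.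
by move=> _ _ /imsetP[a _ ->] /imsetP[b _ ->]; rewrite tauM imset_f.
Qed.
Lemma Lgroup : group_set Lset.
Proof.
apply/group_setP; split; first by rewrite -Lm1 imset_f.
by move=> _ _ /imsetP[a _ ->] /imsetP[b _ ->]; rewrite LmM imset_f.
Qed.
Definition Tg := Group Tgroup.
Definition Lg := Group Lgroup.

Lemma card_Tg : #|Tg| = #|A|.
Proof. by rewrite /= card_imset //; exact: tau_inj. Qed.
Lemma card_Lg : #|Lg| = #|A|.
Proof. by rewrite /= card_imset //; exact: Lm_inj. Qed.

Lemma nTL : Lg \subset 'N(Tg).
Proof.
apply/subsetP => _ /imsetP[a _ ->]; rewrite inE; apply/subsetP => _ /imsetP[t /imsetP[b _ ->] ->].
by rewrite tauJ imset_f.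
Qed.

Lemma ls_sub (Ga : {group {perm A}}) : Tg \subset Ga -> Lg \subset Ga ->
  forall k x, x \in left_series B k -> tau x \in 'L_k.+1(Ga).
Proof.
move=> sT sL; elim=> [|k IH] x.
  by move=> _; apply: (subsetP sT); rewrite imset_f.
rewrite /= /sb_star_set /add_gen inE => /forallP/(_ [set y | tau y \in 'L_k.+2(Ga)]).
rewrite inE; move/implyP; apply; apply/andP; split.
  apply/subsetP => _ /imset2P[a b _ lb ->]; rewrite inE tau_star.
  apply: mem_commg; first exact: IH.
  rewrite /lam groupM //; [apply: (subsetP sL) | apply: (subsetP sT)]; exact: imset_f.
apply/and3P; split.
- by rewrite inE tau0 group1.
- apply/forall_inP => x1; rewrite inE => h1; apply/forall_inP => x2; rewrite inE => h2.
  by rewrite inE -tauM groupM.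
- by apply/forall_inP => x1; rewrite !inE => h1; rewrite -tauV groupV.
Qed.

Lemma zero_ls k : z0 \in left_series B k.
Proof.
case: k => [|k]; first by rewrite inE.
rewrite /= /sb_star_set /add_gen inE; apply/forallP => S; apply/implyP => /andP[_].
by case/and3P.
Qed.

Lemma ln_of_nil : nilpotent (Tg <*> Lg) -> left_nilpotent B.
Proof.
case/lcnP => c Ec; exists c; apply/setP => x; rewrite inE; apply/idP/eqP => [xl|->].
  have := ls_sub (joing_subl _ _) (joing_subr _ _) xl; rewrite Ec inE -tau0.
  by move/eqP/tau_inj.
exact: zero_ls.
Qed.

End BracePerm.

End BP.

Theorem theorem5p2 (n : nat) (n_gt0 : 0 < n) :
  (forall (A : finType) (B : skew_brace A), #|A| = n -> left_nilpotent B) <->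
  (forall p q : nat, p \in primes n -> q \in primes n -> p != q ->
     forall k : nat, 1 <= k <= logn q n -> ~~ (p %| q ^ k - 1)).
Proof.
split; last first.
  move=> Cn A B cA; apply: ln_of_nil; apply: gam.
  - exact: nTL.
  - by apply: (@pazd n _ _ n_gt0 Cn); rewrite card_Tg cA.
  - by apply: (@pazd n _ _ n_gt0 Cn); rewrite card_Lg cA.
  move=> p q npq; apply: (FPL n_gt0 Cn npq (pcore_pgroup _ _) (pcore_pgroup _ _)).
  - apply: subset_trans (pcore_sub _ _) _.
    exact: char_norm_trans (pcore_char _ _) (nTL B).
  - by apply: dvdn_trans (cardSg (pcore_sub _ _)) _; rewrite card_Lg cA.
  - by apply: dvdn_trans (cardSg (pcore_sub _ _)) _; rewrite card_Tg cA.
move=> H p q pn qn npq k /andP[k1 kl]; apply/negP => dvd.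
move: pn qn; rewrite !mem_primes => /and3P[pr_p _ pdn] /and3P[pr_q _ _].
have [F _ cardF] := pPrimePowerField pr_q k1.
have dq : (q ^ k %| n)%N by rewrite (pfactor_dvdn k pr_q n_gt0).
set N := (n %/ q ^ k)%N.
have nE : n = (N * q ^ k)%N by rewrite divnK.
have cop : coprime p (q ^ k) by rewrite coprimeXr // prime_coprime // dvdn_prime2 //.
have pN : (p %| N)%N by rewrite -(Gauss_dvdl _ cop) -nE.
have N0 : (0 < N)%N by rewrite divn_gt0 ?expn_gt0 ?prime_gt0 // dvdn_leq.
have N2 : (1 < N)%N := leq_trans (prime_gt1 pr_p) (dvdn_leq N0 pN).
have [u _ ou] : {u : {unit F} | u \in [set: {unit F}]%G & #[u]%g = p}.
  apply: Cauchy => //=; rewrite card_finField_unit cardF -subn1 //.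
have ordu : (#[u]%g %| (Zp_trunc N).+2)%N by rewrite Zp_cast // ou.
have ntu : u != 1%g by rewrite -order_eq1 ou; apply/eqP => e; move: pr_p; rewrite e.
apply: (cbrace_not_ln ntu N2 (ordu := ordu)).
apply: H; rewrite card_prod cardF card_ord Zp_cast // mulnC -nE //.
Qed.
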